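(* Let the spot price $\pi$ have CDF $F_{\pi}$ and monotonically decreasing density $f_{\pi}$ on $[\underline{\pi},\bar{\pi}]$ with $0\le\underline{\pi}<\bar{\pi}$, and let $t_k,t_e,t_s,t_r>0$ with $\frac{t_e}{2}<t_s\le t_e$. Consider the problem (P3): minimize over $(q,p)$ $$\Phi_3(p,q)=q\,t_e\bar{\pi}+\frac{(1-q)t_e}{1-\frac{t_r}{t_k}(1-F_{\pi}(p))}\cdot\frac{\int_{\underline{\pi}}^{p}x f_{\pi}(x)\,dx}{F_{\pi}(p)}$$ subject to $q t_e\le t_s$, $\;\underline{\pi}\le p\le\bar{\pi}$, $\;0\le q\le 1$, $$\frac{(1-q)t_e}{1-\frac{t_r}{t_k}(1-F_{\pi}(p))}\cdot\frac{1}{F_{\pi}(p)}\le t_s,\qquad t_r<\frac{t_k}{2(1-F_{\pi}(p))}.$$ Then the optimal bid price is $p^*=\bar{\pi}$ and the optimal fraction of the job run on the on-demand instance is $q^*=1-\frac{t_s}{t_e}$.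
   Context: Model (persistent request): a user runs a fraction $q$ of a job (execution time $t_e$, deadline $t_s$) on an on-demand instance at price $\bar{\pi}$ and the rest on a spot instance with bid $p$, where an interrupted job resumes when the bid again exceeds the spot price, incurring a recovery time $t_r$ per resumption; spot prices in slots of length $t_k$ are i.i.d. with CDF $F_{\pi}$ and monotonically decreasing density $f_{\pi}$ on $[\underline{\pi},\bar{\pi}]$. *)

(* Defs.v *)
From Stdlib Require Import Reals Lra.
From Coquelicot Require Import Coquelicot.
Open Scope R_scope.

Definition is_density (f : R -> R) (lo hi : R) : Prop :=
  (forall x, lo <= x <= hi -> 0 <= f x) /\ is_RInt f lo hi 1.

Definition decreasing_on (f : R -> R) (lo hi : R) : Prop :=
  forall x y, lo <= x -> x <= y -> y <= hi -> f y <= f x.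

Definition cdf (f : R -> R) (lo p : R) : R := RInt f lo p.

Definition pmoment (f : R -> R) (lo p : R) : R := RInt (fun x => x * f x) lo p.

Definition Phi3 (f : R -> R) (lo hi tk te tr : R) (p q : R) : R :=
  q * te * hi
  + (1 - q) * te / (1 - tr / tk * (1 - cdf f lo p))
    * (pmoment f lo p / cdf f lo p).

(* The constraint t_r < t_k / (2 (1 - F(p))) is
   written multiplied out, 2 t_r (1 - F(p)) < t_k, so that it reads as
   "no constraint" (t_r < +oo) when F(p) = 1; F(p) > 0 is required so that
   the objective and the deadline constraint (which divide by F(p)) are
   defined. *)
Definition feasible3 (f : R -> R) (lo hi tk te ts tr : R) (q p : R) : Prop :=
  q * te <= ts /\
  lo <= p <= hi /\
  0 <= q <= 1 /\
  0 < cdf f lo p /\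
  (1 - q) * te / (1 - tr / tk * (1 - cdf f lo p)) * (1 / cdf f lo p) <= ts /\
  2 * tr * (1 - cdf f lo p) < tk.

(* Main.v *)
Require Import Defs.
From Stdlib Require Import Reals Lra Lia ZArith.
From Coquelicot Require Import Coquelicot.
Open Scope R_scope.

Lemma Int_part_eq (r : R) (k : nat) : INR k < r < INR k + 1 -> Int_part r = Z.of_nat k.
Proof.
  intros [H1 H2]. destruct (base_Int_part r) as [B1 B2].
  rewrite INR_IZR_INZ in H1, H2.
  assert (A1 : IZR (Int_part r) < IZR (Z.of_nat k + 1)) by (rewrite plus_IZR; lra).
  assert (A2 : IZR (Z.of_nat k - 1) < IZR (Int_part r)) by (rewrite minus_IZR; lra).
  apply lt_IZR in A1. apply lt_IZR in A2. lia.
Qed.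

Lemma glue (h : R -> R) (a d : R) (n : nat) :
  (forall k, (k < n)%nat -> ex_RInt h (a + INR k * d) (a + INR (S k) * d)) ->
  ex_RInt h a (a + INR n * d).
Proof.
  induction n as [|n IH]; intros H.
  - replace (a + INR 0 * d) with a by (simpl; ring). apply ex_RInt_point.
  - apply ex_RInt_Chasles with (a + INR n * d).
    + apply IH. intros k Hk. apply H. lia.
    + apply H. lia.
Qed.

Search (exists n : nat, _ < INR n).
Lemma nat_unbounded (r : R) : exists N : nat, r < INR N.
Proof.
  destruct (archimed r) as [H1 _].
  destruct (Z_lt_le_dec (up r) 0) as [Hz|Hz].
  - exists 0%nat. simpl. apply IZR_lt in Hz. lra.
  - exists (Z.to_nat (up r)). rewrite INR_IZR_INZ, Z2Nat.id; [lra|lia].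
Qed.

Lemma ex_RInt_xmul (g : R -> R) (a b : R) :
  a < b -> ex_RInt g a b -> ex_RInt (fun x => x * g x) a b.
Proof.
  intros Hab Hg.
  set (gc := fun x => g (Rmax a (Rmin b x))).
  assert (Hgc : ex_RInt gc a b).
  { apply ex_RInt_ext with g; auto. intros x Hx.
    rewrite Rmin_left, Rmax_right in Hx by lra. unfold gc.
    rewrite Rmin_right, Rmax_right by lra. reflexivity. }
  apply ex_RInt_ext with (fun x => x * gc x).
  { intros x Hx. rewrite Rmin_left, Rmax_right in Hx by lra. unfold gc.
    rewrite Rmin_right, Rmax_right by lra. reflexivity. }
  destruct (ex_RInt_ub gc a b Hgc) as [M HM].
  assert (HB : forall x, Rabs (gc x) <= Rabs M).
  { intros x. unfold gc.
    assert (E : g (Rmax a (Rmin b x)) = gc (Rmax a (Rmin b x))).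
    { unfold gc. f_equal. unfold Rmin, Rmax.
      repeat (destruct Rle_dec; try lra); repeat (destruct Rle_dec; try lra). }
    rewrite E. eapply Rle_trans; [apply (HM (Rmax a (Rmin b x)))|apply Rle_abs].
    rewrite (Rmin_left a b), (Rmax_right a b) by lra.
    split; [apply Rmax_l|]. apply Rmax_lub; [lra|apply Rmin_l]. }
  set (d := fun n : nat => (b - a) / INR (S n)).
  assert (Hd : forall n, 0 < d n).
  { intros n. unfold d. apply Rdiv_lt_0_compat. lra. apply lt_0_INR; lia. }
  set (fn := fun (n : nat) (x : R) => (a + d n * IZR (Int_part ((x - a) / d n))) * gc x).
  assert (Hfn : forall n, ex_RInt (fn n) a b).
  { intros n.
    assert (Hdn0 : INR (S n) * d n = b - a) by (unfold d; field; apply not_0_INR; lia).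
    cut (ex_RInt (fn n) a (a + INR (S n) * d n)).
    { intros G. replace (a + INR (S n) * d n) with b in G by lra. exact G. }
    apply glue. intros k Hk.
    assert (Hk1 : INR (S k) <= INR (S n)) by (apply le_INR; lia).
    assert (Hk0 : 0 <= INR k) by apply pos_INR.
    assert (Hdn : INR (S n) * d n = b - a) by (unfold d; field; apply not_0_INR; lia).
    pose proof (Hd n) as Hdp.
    apply ex_RInt_ext with (fun x => (a + d n * INR k) * gc x).
    { intros x Hx. rewrite Rmin_left, Rmax_right in Hx.
      2,3: rewrite S_INR; nra.
      unfold fn. rewrite (Int_part_eq _ k). rewrite <- INR_IZR_INZ. reflexivity.
      rewrite S_INR in Hx. split.
      - apply Rmult_lt_reg_r with (d n). lra. unfold Rdiv. rewrite Rmult_assoc, Rinv_l; lra.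
      - apply Rmult_lt_reg_r with (d n). lra. unfold Rdiv. rewrite Rmult_assoc, Rinv_l; lra. }
    apply (ex_RInt_scal gc _ _ (a + d n * INR k)).
    apply (ex_RInt_Chasles_2 (V:=R_CompleteNormedModule) gc a). split. nra. rewrite S_INR; nra.
    apply (ex_RInt_Chasles_1 (V:=R_CompleteNormedModule) gc _ _ b). split. rewrite S_INR; nra. nra. exact Hgc. }
  destruct (filterlim_RInt fn a b eventually _ (fun x => x * gc x) (fun n => RInt (fn n) a b))
    as [If [_ HIf]].
  - intros n. apply RInt_correct. apply Hfn.
  - intros P [eps Heps].
    destruct (nat_unbounded ((b - a) * (Rabs M + 1) / eps)) as [N HN].
    exists N. intros n Hn. apply Heps. intros t.
    change (Rabs (fn n t - t * gc t) < eps).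
    unfold fn.
    set (r := (t - a) / d n).
    pose proof (Hd n) as Hdp.
    destruct (base_Int_part r) as [B1 B2].
    assert (Et : t = a + d n * r) by (unfold r; field; lra).
    replace ((a + d n * IZR (Int_part r)) * gc t - t * gc t)
      with ((d n * (IZR (Int_part r) - r)) * gc t) by (rewrite Et at 3; ring).
    rewrite Rabs_mult, Rabs_mult, (Rabs_pos_eq (d n)) by lra.
    assert (H1 : Rabs (IZR (Int_part r) - r) <= 1).
    { apply Rabs_le. lra. }
    pose proof (HB t) as H2. pose proof (Rabs_pos (gc t)) as H3.
    pose proof (Rabs_pos (IZR (Int_part r) - r)) as H4.
    assert (H5 : d n * (Rabs M + 1) < eps).
    { assert (HSn : INR N < INR (S n)) by (apply lt_INR; lia).
      pose proof (cond_pos eps) as He.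
      assert (H6 : (b - a) * (Rabs M + 1) < eps * INR (S n)).
      { apply Rmult_lt_reg_r with (/ eps). apply Rinv_0_lt_compat; lra.
        replace (eps * INR (S n) * / eps) with (INR (S n)) by (field; lra).
        unfold Rdiv in HN. lra. }
      unfold d. unfold Rdiv.
      apply Rmult_lt_reg_r with (INR (S n)). apply lt_0_INR; lia.
      replace ((b - a) * / INR (S n) * (Rabs M + 1) * INR (S n)) with ((b - a) * (Rabs M + 1))
        by (field; apply not_0_INR; lia). lra. }
    pose proof (Rabs_pos M).
    assert (H7 : d n * Rabs (IZR (Int_part r) - r) <= d n) by nra.
    assert (H8 : d n * Rabs (IZR (Int_part r) - r) * Rabs (gc t) <= d n * Rabs M).
    { apply Rle_trans with (d n * Rabs (gc t)). apply Rmult_le_compat_r; lra.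
      apply Rmult_le_compat_l; lra. }
    nra.
  - exists If. exact HIf.
Qed.

Theorem proposition3 (f : R -> R) (lo hi tk te ts tr : R) :
  0 <= lo -> lo < hi ->
  is_density f lo hi ->
  decreasing_on f lo hi ->
  0 < tk -> 0 < te -> 0 < ts -> 0 < tr ->
  te / 2 < ts -> ts <= te ->
  feasible3 f lo hi tk te ts tr (1 - ts / te) hi /\
  (forall q p, feasible3 f lo hi tk te ts tr q p ->
     Phi3 f lo hi tk te tr hi (1 - ts / te) <= Phi3 f lo hi tk te tr p q).
Proof.
  intros Hlo Hlohi [Hf0 Hf1] _ Htk Hte Hts Htr Hts2 Htse.
  assert (HF1 : cdf f lo hi = 1) by (unfold cdf; exact (is_RInt_unique _ _ _ _ Hf1)).
  assert (Hex : ex_RInt f lo hi) by (exists 1; exact Hf1).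
  assert (Hexx : ex_RInt (fun x => x * f x) lo hi) by (apply ex_RInt_xmul; auto).
  assert (Hq1 : ts / te <= 1).
  { apply Rmult_le_reg_r with te; auto. unfold Rdiv. rewrite Rmult_assoc, Rinv_l; lra. }
  assert (Hq0 : 0 < ts / te) by (apply Rdiv_lt_0_compat; lra).
  split.
  - unfold feasible3. rewrite HF1.
    repeat split; try lra.
    + replace ((1 - ts / te) * te) with (te - ts) by (field; lra). lra.
    + replace ((1 - (1 - ts / te)) * te / (1 - tr / tk * (1 - 1)) * (1 / 1)) with ts
        by (field; lra). lra.
  - intros q p [H1 [[H2a H2b] [[H3a H3b] [H4 [H5 H6]]]]].
    unfold Phi3. rewrite HF1. unfold pmoment. unfold cdf in *.
    assert (exF : ex_RInt f lo p)
      by (apply (ex_RInt_Chasles_1 (V:=R_CompleteNormedModule) f _ _ hi); auto).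
    assert (exF2 : ex_RInt f p hi)
      by (apply (ex_RInt_Chasles_2 (V:=R_CompleteNormedModule) f lo); auto).
    assert (exX : ex_RInt (fun x => x * f x) lo p)
      by (apply (ex_RInt_Chasles_1 (V:=R_CompleteNormedModule) _ _ _ hi); auto).
    assert (exX2 : ex_RInt (fun x => x * f x) p hi)
      by (apply (ex_RInt_Chasles_2 (V:=R_CompleteNormedModule) _ lo); auto).
    assert (Cf : RInt f lo p + RInt f p hi = RInt f lo hi)
      by exact (RInt_Chasles (V:=R_CompleteNormedModule) f lo p hi exF exF2).
    assert (Cx : RInt (fun x => x * f x) lo p + RInt (fun x => x * f x) p hi
                 = RInt (fun x => x * f x) lo hi)
      by exact (RInt_Chasles (V:=R_CompleteNormedModule) _ lo p hi exX exX2).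
    unfold cdf in HF1. rewrite HF1 in Cf.
    assert (Sc : forall a b, ex_RInt f a b -> RInt (fun x => hi * f x) a b = hi * RInt f a b)
      by (intros a b Hab; exact (RInt_scal (V:=R_CompleteNormedModule) f a b hi Hab)).
    assert (Pos2 : 0 <= RInt f p hi).
    { apply RInt_ge_0; auto. intros x Hx. apply Hf0. lra. }
    assert (PosM : 0 <= RInt (fun x => x * f x) lo p).
    { apply RInt_ge_0; auto. intros x Hx. apply Rmult_le_pos. lra. apply Hf0. lra. }
    assert (LeM : RInt (fun x => x * f x) lo p <= hi * RInt f lo p).
    { rewrite <- Sc by auto. apply RInt_le; auto.
      apply (ex_RInt_scal (V:=R_NormedModule) f lo p hi exF).
      intros x Hx. apply Rmult_le_compat_r. apply Hf0. lra. lra. }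
    assert (LeM2 : RInt (fun x => x * f x) p hi <= hi * RInt f p hi).
    { rewrite <- Sc by auto. apply RInt_le; auto.
      apply (ex_RInt_scal (V:=R_NormedModule) f p hi hi exF2).
      intros x Hx. apply Rmult_le_compat_r. apply Hf0. lra. lra. }
    set (F := RInt f lo p) in *.
    set (M := RInt (fun x => x * f x) lo p) in *.
    set (m := RInt (fun x => x * f x) lo hi) in *.
    set (u := tr / tk * (1 - F)) in *.
    assert (Hu0 : 0 <= u).
    { unfold u. apply Rmult_le_pos. apply Rlt_le, Rdiv_lt_0_compat; lra. lra. }
    assert (Hutk : u * tk = tr * (1 - F)) by (unfold u; field; lra).
    assert (Hu1 : u < 1 / 2) by nra.
    set (D := 1 - u) in *.
    set (K := (1 - q) * te / D * (1 / F)) in *.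
    assert (HK0 : 0 <= K).
    { unfold K. apply Rmult_le_pos. unfold Rdiv. apply Rmult_le_pos.
      apply Rmult_le_pos; lra. apply Rlt_le, Rinv_0_lt_compat. unfold D; lra.
      apply Rlt_le, Rdiv_lt_0_compat; lra. }
    replace ((1 - ts / te) * te * hi + (1 - (1 - ts / te)) * te / (1 - tr / tk * (1 - 1)) * (m / 1))
      with (te * hi - ts * hi + ts * m) by (field; lra).
    replace (q * te * hi + (1 - q) * te / D * (M / F)) with (q * te * hi + K * M)
      by (unfold K; field; split; unfold D; lra).
    assert (HB : (1 - q) * te = K * D * F) by (unfold K; field; split; unfold D; lra).
    assert (HB2 : (1 - q) * te <= K * F).
    { rewrite HB. assert (0 <= K * F) by nra. unfold D. nra. }
    assert (H7 : K * (F * hi - M) <= ts * (F * hi - M)).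
    { apply Rmult_le_compat_r; lra. }
    assert (H8 : (1 - q) * te * hi <= K * F * hi) by (apply Rmult_le_compat_r; lra).
    nra.
Qed.
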